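(* Let $c>0$. Then, as $r\to\infty$, $$\log\Big(\sum_{k=0}^\infty\frac{c^k}{k!}e^{-c}e^{-r/(k+1)}\Big)\sim-\sqrt{2r\log r},$$ i.e. the ratio of the two sides tends to $1$. *)

(* Defs.v *)
From Stdlib Require Import Reals Arith.
From Coquelicot Require Import Coquelicot.
Open Scope R_scope.

Definition term (c r : R) (k : nat) : R :=
  c ^ k / INR (Factorial.fact k) * exp (- c) * exp (- r / INR (k + 1)).

(* S(r) = sum_{k>=0} term c r k  (Coquelicot's Series = limit of partial sums;
   the series converges for every c, r since terms are positive and bounded by
   the Poisson weights times e^{|r|}). *)
Definition S (c r : R) : R := Series (term c r).

(* Main.v *)
Require Import Defs.
From Stdlib Require Import Reals Arith Lra Lia Psatz.
From Coquelicot Require Import Coquelicot.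
Open Scope R_scope.

Lemma exp_mono x y : x <= y -> exp x <= exp y.
Proof. intros [H|H]; [left; apply exp_increasing; exact H| subst; lra]. Qed.

Lemma ln_le_sub1 y : 0 < y -> ln y <= y - 1.
Proof. intros Hy. pose proof (exp_ineq1_le (ln y)). rewrite exp_ln in H; lra. Qed.

Lemma ln_small (eta t : R) : 0 < eta -> 4 / (eta * eta) <= t -> ln t <= eta * t.
Proof.
  intros He Ht.
  assert (H4 : eta * eta * (4 / (eta * eta)) = 4) by (field; lra).
  assert (H4t : 4 <= eta * eta * t) by nra.
  assert (Ht0 : 0 < t) by nra.
  set (u := sqrt t).
  assert (Hu : u * u = t) by (unfold u; apply sqrt_sqrt; lra).
  assert (Hu0 : 0 < u) by (unfold u; apply sqrt_lt_R0; lra).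
  assert (Hl : ln t = 2 * ln u). { rewrite <- Hu, ln_mult; lra. }
  pose proof (ln_le_sub1 u Hu0).
  assert (Heu : 0 < eta * u) by nra.
  assert (Hsq : 4 <= (eta*u)*(eta*u)) by (replace ((eta*u)*(eta*u)) with (eta*eta*(u*u)) by ring; rewrite Hu; lra).
  assert (2 <= eta * u).
  { destruct (Rlt_le_dec (eta*u) 2) as [Hlt|]; [|lra].
    assert (0 < (2 - eta*u) * (2 + eta*u)) by (apply Rmult_lt_0_compat; lra). nra. }
  nra.
Qed.

Lemma fact_lower (n : nat) : exp (INR n * ln (INR n) - INR n) <= INR (fact n).
Proof.
  induction n as [|n IH].
  - simpl. rewrite Rmult_0_l, Rminus_0_r, exp_0. lra.
  - rewrite fact_simpl, mult_INR.
    destruct n as [|n'].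
    + replace (INR 1 * ln (INR 1) - INR 1) with (-1) by (simpl; rewrite ln_1; ring).
      simpl. pose proof (exp_mono (-1) 0). rewrite exp_0 in H. lra.
    + set (x := INR (Datatypes.S n')) in *.
      assert (Hx : 1 <= x) by (unfold x; rewrite S_INR; pose proof (pos_INR n'); lra).
      rewrite S_INR. fold x.
      assert (Hk : (x+1) * ln (x+1) - (x+1) <= ln (x+1) + (x * ln x - x)).
      { assert (Hd : ln (x+1) - ln x <= 1 / x).
        { rewrite <- ln_div by lra. pose proof (ln_le_sub1 ((x+1)/x)).
          assert ((x+1)/x - 1 = 1/x) by (field; lra). 
          assert (0 < (x+1)/x) by (apply Rdiv_lt_0_compat; lra). lra. }
        assert (x * (ln (x+1) - ln x) <= 1).
        { apply Rmult_le_compat_l with (r:=x) in Hd; [|lra].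
          replace (x * (1/x)) with 1 in Hd by (field; lra). lra. }
        nra. }
      apply Rle_trans with (exp (ln (x+1) + (x * ln x - x))).
      { apply exp_mono; exact Hk. }
      rewrite exp_plus, exp_ln by lra.
      apply Rmult_le_compat_l; lra.
Qed.

Lemma fact_upper (n : nat) : INR (fact n) <= INR n ^ n.
Proof.
  induction n as [|n IH].
  - simpl; lra.
  - rewrite fact_simpl, mult_INR. rewrite <- tech_pow_Rmult.
    apply Rmult_le_compat_l; [apply pos_INR|].
    apply Rle_trans with (1:=IH). apply pow_incr. split; [apply pos_INR|].
    apply le_INR; lia.
Qed.

Lemma term_pt (c r : R) (k : nat) : 0 < c ->
  (2*c)^k / INR (fact k) * exp (- r / INR (k+1)) <=
  exp ((Rabs (ln (2*c)) + 2) * INR (k+1) - INR (k+1) * ln (INR (k+1)) + - r / INR (k+1)).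
Proof.
  intros hc.
  set (m := INR (k+1)). set (l := ln (2*c)).
  assert (Hm : 1 <= m) by (unfold m; rewrite plus_INR; simpl; pose proof (pos_INR k); lra).
  assert (Hkm : INR k <= m) by (unfold m; rewrite plus_INR; simpl; lra).
  assert (H1 : (2*c)^k <= exp (m * Rabs l)).
  { rewrite <- (exp_ln ((2*c)^k)) by (apply pow_lt; lra).
    rewrite ln_pow by lra. apply exp_mono. fold l.
    pose proof (Rle_abs l). pose proof (Rabs_pos l). pose proof (pos_INR k). nra. }
  assert (Hf : INR (fact (k+1)) = m * INR (fact k)).
  { unfold m. replace (k+1)%nat with (Datatypes.S k) by lia. rewrite fact_simpl, mult_INR. reflexivity. }
  assert (Hfp : 0 < INR (fact k)) by (apply lt_0_INR, lt_O_fact).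
  assert (H2 : / INR (fact k) <= exp m * exp (m - m * ln m)).
  { pose proof (fact_lower (k+1)) as Hl. fold m in Hl. rewrite Hf in Hl.
    pose proof (exp_ineq1_le m).
    assert (Hinv : exp (m - m * ln m) = / exp (m * ln m - m)).
    { rewrite <- exp_Ropp. f_equal. ring. }
    rewrite Hinv.
    assert (0 < exp (m * ln m - m)) by apply exp_pos.
    apply Rle_trans with (m * / exp (m * ln m - m)).
    - apply (Rmult_le_reg_l (exp (m * ln m - m))); auto.
      apply (Rmult_le_reg_l (INR (fact k))); auto.
      replace (INR (fact k) * (exp (m * ln m - m) * / INR (fact k))) with (exp (m * ln m - m)) by (field; lra).
      replace (INR (fact k) * (exp (m * ln m - m) * (m * / exp (m * ln m - m)))) with (m * INR (fact k)) by (field; lra).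
      exact Hl.
    - apply Rmult_le_compat_r; [left; apply Rinv_0_lt_compat; auto|lra]. }
  unfold Rdiv at 1.
  replace ((Rabs l + 2) * m - m * ln m + - r / m) with (m * Rabs l + m + (m - m * ln m) + - r / m) by ring.
  rewrite !exp_plus.
  apply Rmult_le_compat_r; [left; apply exp_pos|].
  rewrite (Rmult_assoc (exp (m * Rabs l))).
  apply Rmult_le_compat; auto.
  - apply pow_le; lra.
  - left; apply Rinv_0_lt_compat; auto.
Qed.

Lemma Rdiv_le_0_compat a b : 0 <= a -> 0 < b -> 0 <= a / b.
Proof. intros. unfold Rdiv. apply Rmult_le_pos; auto. left; apply Rinv_0_lt_compat; auto. Qed.

Lemma sq_le X Y : 0 <= X -> 0 <= Y -> Y * Y <= X * X -> Y <= X.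
Proof. intros. destruct (Rle_lt_dec Y X); auto. nra. Qed.

Lemma gbound (r s t L D m : R) :
  0 < s -> r = s*s -> ln s = t/2 -> 8 <= t -> 0 <= L -> L*L = 2*r*t -> 0 <= D -> 1 <= m ->
  0 < t/2 - ln t - D -> 0 <= ln t -> t/2 <= t - D/t ->
  D*m - m*ln m + - r/m <= - L * (1 - (2*ln t + 2*D)/t).
Proof.
  intros Hs Hr Hls Ht HL HL2 HD Hm Ha Hlt Htd.
  set (a := t/2 - ln t - D) in *.
  assert (Hrho : 1 - (2*ln t + 2*D)/t = 2*a/t) by (unfold a; field; lra).
  rewrite Hrho.
  assert (Hrm : r/m * m = r) by (field; lra).
  assert (Hrm0 : 0 <= r/m) by (apply Rdiv_le_0_compat; nra).
  assert (H2a : 0 <= 2*a/t <= 1).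
  { split. apply Rdiv_le_0_compat; lra. rewrite <- Hrho. assert (0 <= (2*ln t + 2*D)/t) by (apply Rdiv_le_0_compat; lra). lra. }
  assert (HlnDiv : - r / m = - (r/m)) by (field; lra).
  rewrite HlnDiv.
  destruct (Rle_lt_dec (s/t) m) as [Hc|Hc].
  - assert (Hlm : t/2 - ln t <= ln m).
    { rewrite <- Hls, <- ln_div by lra. apply ln_le; auto. apply Rdiv_lt_0_compat; lra. }
    assert (Hmlm : m * (t/2 - ln t) <= m * ln m) by (apply Rmult_le_compat_l; lra).
    assert (HY : L * (2*a/t) <= m*a + r/m).
    { apply sq_le.
      - assert (0 <= m*a) by (apply Rmult_le_pos; lra); lra.
      - apply Rmult_le_pos; lra.
      - set (q := 2*a/t) in *.
        assert (Hq : q * t = 2*a) by (unfold q; field; lra).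
        assert (Y2 : L * q * (L * q) = 4*a*r*q).
        { replace (L * q * (L * q)) with (L*L*q*q) by ring. rewrite HL2.
          replace (2*r*t*q*q) with (2*r*q*(q*t)) by ring. rewrite Hq. ring. }
        assert (X2 : (m*a + r/m) * (m*a + r/m) = (m*a - r/m)*(m*a - r/m) + 4*a*r).
        { replace (4*a*r) with (4*a*(r/m*m)) by (rewrite Hrm; ring). ring. }
        rewrite Y2, X2.
        assert (0 <= (m*a - r/m)*(m*a - r/m)) by apply Rle_0_sqr.
        assert (0 <= a*r) by (rewrite Hr; apply Rmult_le_pos; [lra|apply Rle_0_sqr]).
        assert (a*r*q <= a*r) by (rewrite <- (Rmult_1_r (a*r)) at 2; apply Rmult_le_compat_l; lra).
        lra. }
    assert (m*(t/2 - ln t) = m*a + D*m) by (unfold a; ring).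
    lra.
  - assert (Hlm : 0 <= ln m) by (rewrite <- ln_1; apply ln_le; lra).
    assert (Hmlm : 0 <= m * ln m) by (apply Rmult_le_pos; lra).
    assert (Hmt : m * t < s) by (apply (Rmult_lt_compat_r t) in Hc; [|lra];
        replace (s/t*t) with s in Hc by (field; lra); lra).
    assert (Hrm2 : s * t <= r/m).
    { apply (Rmult_le_reg_r m); [lra|]. rewrite Hrm, Hr. nra. }
    assert (HDm : D * m <= D * (s/t)) by (apply Rmult_le_compat_l; lra).
    assert (HL3 : L <= s * (t - D/t)).
    { apply sq_le. nra. auto.
      rewrite HL2, Hr. 
      assert (t/2*(t/2) <= (t - D/t)*(t - D/t)) by nra.
      assert (2*t <= t/2*(t/2)) by nra.
      nra. }
    assert (L * (2*a/t) <= L) by nra.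
    assert (D * (s/t) = s * (D/t)) by (field; lra).
    nra.
Qed.

Lemma term_pos c r k : 0 < c -> 0 < term c r k.
Proof.
  intros hc. unfold term. apply Rmult_lt_0_compat; [apply Rmult_lt_0_compat|]; try apply exp_pos.
  apply Rdiv_lt_0_compat. apply pow_lt; lra. apply lt_0_INR, lt_O_fact.
Qed.

Lemma Series_ge_term (a : nat -> R) K : (forall n, 0 <= a n) -> ex_series a -> a K <= Series a.
Proof.
  intros Ha Hex.
  rewrite (Series_incr_n a (Datatypes.S K)) by (lia || exact Hex). simpl Init.Nat.pred.
  assert (Hsum : a K <= sum_f_R0 a K).
  { destruct K. simpl; lra. simpl. pose proof (cond_pos_sum a K Ha). lra. }
  assert (0 <= Series (fun k => a (Datatypes.S K + k)%nat)).
  { pose proof (Series_scal_l 0 (fun k => a (Datatypes.S K + k)%nat)) as H0.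
    rewrite Rmult_0_l in H0.
    rewrite <- H0. apply Series_le.
    - intros n. rewrite Rmult_0_l. split; [lra| apply Ha].
    - apply (ex_series_incr_n a (Datatypes.S K)). exact Hex. }
  lra.
Qed.

Lemma S_upper c r B : 0 < c ->
  (forall k, (Rabs (ln (2*c)) + 2) * INR (k+1) - INR (k+1) * ln (INR (k+1)) + - r / INR (k+1) <= B) ->
  ex_series (term c r) /\ Series (term c r) <= 2 * exp (- c) * exp B.
Proof.
  intros hc HB.
  set (K := exp (-c) * exp B).
  assert (Hb : forall k, 0 <= term c r k <= (1/2)^k * K).
  { intros k. split; [left; apply term_pos; auto|].
    unfold term, K.
    replace (c^k) with ((1/2)^k * (2*c)^k) by (rewrite <- Rpow_mult_distr; f_equal; field).
    pose proof (term_pt c r k hc) as Ht.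
    pose proof (exp_mono _ _ (HB k)) as He.
    assert (0 < (1/2)^k) by (apply pow_lt; lra).
    assert (0 < exp (-c)) by apply exp_pos.
    replace ((1/2)^k * (2*c)^k / INR (fact k) * exp (-c) * exp (- r / INR (k+1)))
      with ((1/2)^k * exp (-c) * ((2*c)^k / INR (fact k) * exp (- r / INR (k+1)))) by (unfold Rdiv; ring).
    replace ((1/2)^k * (exp (-c) * exp B)) with ((1/2)^k * exp (-c) * exp B) by ring.
    apply Rmult_le_compat_l; [nra|lra]. }
  assert (Hg : ex_series (fun k => (1/2)^k * K)).
  { apply ex_series_scal_r. exists (/ (1 - 1/2)). apply is_series_geom. rewrite Rabs_pos_eq; lra. }
  assert (Hex : ex_series (term c r)).
  { apply (@ex_series_le R_AbsRing R_CompleteNormedModule (term c r) (fun k => (1/2)^k * K)); auto.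
    intros k. change (norm (term c r k)) with (Rabs (term c r k)).
    rewrite Rabs_pos_eq; apply Hb. }
  split; auto.
  apply Rle_trans with (Series (fun k => (1/2)^k * K)).
  - apply Series_le; auto.
  - rewrite Series_scal_r, Series_geom by (rewrite Rabs_pos_eq; lra).
    unfold K. right. field.
Qed.

Lemma term_lower c r t L (K : nat) : 0 < c -> 0 < r -> 1 <= t -> t = ln r -> 0 < L -> L*L = 2*r*t ->
  c <= L/t -> INR K <= L/t -> L/t <= INR K + 1 ->
  exp (- L - c - (Rabs (ln c) + 1) * (L/t)) <= term c r K.
Proof.
  intros hc hr ht Ht hL HL2 Hcx HK1 HK2.
  set (x := L/t) in *.
  assert (Hx0 : 0 < x) by lra.
  assert (Hxt : x * t = L) by (unfold x; field; lra).
  assert (Ha : - L / 2 <= - r / INR (K+1)).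
  { rewrite plus_INR. simpl INR.
    assert (r / (INR K + 1) <= r / x).
    { unfold Rdiv. apply Rmult_le_compat_l; [lra|]. apply Rinv_le_contravar; lra. }
    assert (r / x = L/2).
    { apply (Rmult_eq_reg_r (2*x)); [|lra]. replace (r/x*(2*x)) with (2*r) by (field; lra).
      replace (L/2*(2*x)) with (L*x) by field. rewrite <- Hxt.
      apply (Rmult_eq_reg_r t); [|lra]. replace (L*(x*t)*t) with (L*L*(x*x)*0 + (x*t)*(x*t)*L*L/(x*x)*0 + L*(x*t)*t) by ring.
      rewrite Hxt. nra. }
    unfold Rdiv in *. rewrite !Ropp_mult_distr_l_reverse. lra. }
  assert (Hfx : INR (fact K) <= x ^ K).
  { apply Rle_trans with (1 := fact_upper K). apply pow_incr. split; [apply pos_INR|lra]. }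
  assert (Hf0 : 0 < INR (fact K)) by (apply lt_0_INR, lt_O_fact).
  assert (Hb : exp (INR K * (ln c - ln x)) <= c^K / INR (fact K)).
  { apply Rle_trans with (c^K / x^K).
    - rewrite <- (exp_ln (c^K)) by (apply pow_lt; lra).
      rewrite <- (exp_ln (x^K)) by (apply pow_lt; lra).
      rewrite !ln_pow by lra. unfold Rdiv. rewrite <- exp_Ropp, <- exp_plus.
      apply exp_mono. lra.
    - unfold Rdiv. apply Rmult_le_compat_l; [apply pow_le; lra|].
      apply Rinv_le_contravar; auto. }
  assert (Hlcx : ln c - ln x <= 0) by (pose proof (ln_le c x hc Hcx); lra).
  assert (Hb2 : x * (ln c - ln x) <= INR K * (ln c - ln x)) by nra.
  assert (Hlnx : 2 * ln x <= ln 2 + t).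
  { assert (x * x <= 2 * r).
    { assert (x * x * t = 2 * r) by (apply (Rmult_eq_reg_r t); [|lra]; replace (x*x*t*t) with ((x*t)*(x*t)) by ring; rewrite Hxt; lra).
      nra. }
    rewrite Ht, <- ln_mult by lra.
    replace (2 * ln x) with (ln (x*x)) by (rewrite ln_mult; lra).
    apply ln_le; nra. }
  assert (Hln2 : ln 2 <= 1) by (pose proof (ln_le_sub1 2); lra).
  assert (Hlc : - Rabs (ln c) <= ln c) by (pose proof (Rle_abs (- ln c)); rewrite Rabs_Ropp in H; lra).
  assert (Hexp : - L - c - (Rabs (ln c) + 1) * x <= INR K * (ln c - ln x) + - c + - r / INR (K+1)).
  { assert (x * ln x <= x * (ln 2 + t) / 2) by nra.
    nra. }
  apply Rle_trans with (exp (INR K * (ln c - ln x) + - c + - r / INR (K+1))).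
  { apply exp_mono; exact Hexp. }
  rewrite !exp_plus. unfold term.
  apply Rmult_le_compat_r; [left; apply exp_pos|].
  apply Rmult_le_compat_r; [left; apply exp_pos|]. exact Hb.
Qed.

Theorem lemma1 (c : R) (hc : 0 < c) :
  is_lim (fun r => ln (S c r) / (- sqrt (2 * r * ln r))) p_infty 1.
Proof.
  apply is_lim_spec. intros eps. simpl.
  set (e := Rmin eps 1 / 4).
  assert (He : 0 < e /\ e <= eps/4 /\ e <= 1/4).
  { unfold e. pose proof (cond_pos eps). unfold Rmin; destruct Rle_dec; lra. }
  destruct He as [He0 [He1 He2]].
  set (D := Rabs (ln (2*c)) + 2).
  set (C := Rabs (ln c) + 1).
  assert (HD : 0 <= D) by (unfold D; pose proof (Rabs_pos (ln (2*c))); lra).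
  assert (HC : 0 <= C) by (unfold C; pose proof (Rabs_pos (ln c)); lra).
  set (T := Rmax 8 (Rmax (64/(e*e)) (Rmax (4*D/e) (C/e)))).
  set (S0 := Rmax 1 (Rmax (1/e) (Rmax (c/e) (c*c)))).
  exists (Rmax (exp T) (S0*S0)).
  intros r Hr.
  assert (HT : 8 <= T /\ 64/(e*e) <= T /\ 4*D/e <= T /\ C/e <= T).
  { unfold T. split; [apply Rmax_l|]. split; [eapply Rle_trans; [|apply Rmax_r]; apply Rmax_l|].
    split; [eapply Rle_trans; [|apply Rmax_r]; eapply Rle_trans; [|apply Rmax_r]; apply Rmax_l|].
    eapply Rle_trans; [|apply Rmax_r]; eapply Rle_trans; [|apply Rmax_r]; apply Rmax_r. }
  assert (HS0 : 1 <= S0 /\ 1/e <= S0 /\ c/e <= S0 /\ c*c <= S0).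
  { unfold S0. split; [apply Rmax_l|]. split; [eapply Rle_trans; [|apply Rmax_r]; apply Rmax_l|].
    split; [eapply Rle_trans; [|apply Rmax_r]; eapply Rle_trans; [|apply Rmax_r]; apply Rmax_l|].
    eapply Rle_trans; [|apply Rmax_r]; eapply Rle_trans; [|apply Rmax_r]; apply Rmax_r. }
  assert (Hr1 : exp T < r) by (eapply Rle_lt_trans; [apply Rmax_l|exact Hr]).
  assert (Hr2 : S0*S0 < r) by (eapply Rle_lt_trans; [apply Rmax_r|exact Hr]).
  assert (hr : 0 < r) by (pose proof (exp_pos T); lra).
  set (t := ln r).
  assert (Ht : T <= t) by (unfold t; rewrite <- (ln_exp T); apply ln_le; [apply exp_pos|lra]).
  set (s := sqrt r).
  assert (Hss : s * s = r) by (unfold s; apply sqrt_sqrt; lra).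
  assert (Hs0 : 0 < s) by (unfold s; apply sqrt_lt_R0; lra).
  assert (HsS : S0 <= s).
  { unfold s. rewrite <- (sqrt_square S0) by lra. apply sqrt_le_1_alt; lra. }
  assert (Hls : ln s = t / 2) by (unfold t; rewrite <- Hss, ln_mult; lra).
  set (L := sqrt (2 * r * ln r)).
  fold t in L.
  assert (HL2 : L * L = 2 * r * t) by (unfold L; apply sqrt_sqrt; nra).
  assert (HL0 : 0 < L) by (unfold L; apply sqrt_lt_R0; nra).
  destruct HT as [HT1 [HT2 [HT3 HT4]]].
  destruct HS0 as [HS1 [HS2 [HS3 HS4]]].
  assert (Ht8 : 8 <= t) by lra.
  assert (Hlt0 : 0 <= ln t) by (rewrite <- ln_1; apply ln_le; lra).
  assert (Hlt : ln t <= (e/4) * t).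
  { apply ln_small; [lra|]. replace (4 / (e/4 * (e/4))) with (64/(e*e)) by (field; lra). lra. }
  assert (HDt : D <= e/4 * t).
  { assert (4*D/e * e = 4 * D) by (field; lra). nra. }
  assert (HCt : C <= e * t).
  { assert (C/e * e = C) by (field; lra). nra. }
  set (rho := (2 * ln t + 2 * D) / t).
  assert (Hrho : 0 <= rho <= e).
  { unfold rho. split. apply Rdiv_le_0_compat; lra.
    apply (Rmult_le_reg_r t); [lra|]. replace ((2 * ln t + 2 * D) / t * t) with (2 * ln t + 2 * D) by (field; lra).
    lra. }
  assert (Hexp : forall k, D * INR (k+1) - INR (k+1) * ln (INR (k+1)) + - r / INR (k+1) <= - L * (1 - rho)).
  { intros k. apply (gbound r s t L D); auto; try lra.
    - rewrite plus_INR; simpl; pose proof (pos_INR k); lra.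
    - assert (e/4*t <= t/16) by nra. lra.
    - assert (D / t <= t/2).
      { apply (Rmult_le_reg_r t); [lra|]. replace (D/t*t) with D by (field; lra). nra. }
      lra. }
  destruct (S_upper c r (- L * (1 - rho)) hc Hexp) as [Hex HSu].
  assert (HsL : s <= L).
  { apply sq_le; try lra. rewrite HL2, <- Hss. nra. }
  assert (Hct : c * t <= L).
  { apply sq_le; try nra. rewrite HL2, <- Hss.
    assert (t <= 2 * s) by (pose proof (ln_le_sub1 s Hs0); lra).
    assert (c * c * t <= c * c * (2 * s)) by (apply Rmult_le_compat_l; nra).
    assert (c * c * s <= s * s) by (apply Rmult_le_compat_r; lra).
    nra. }
  assert (Hx0 : 0 <= L / t) by (apply Rdiv_le_0_compat; lra).
  destruct (nfloor_ex (L/t) Hx0) as [K [HK1 HK2]].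
  assert (Hcx : c <= L / t).
  { apply (Rmult_le_reg_r t); [lra|]. replace (L/t*t) with L by (field; lra). lra. }
  pose proof (term_lower c r t L K hc hr ltac:(lra) eq_refl HL0 HL2 Hcx HK1 (Rlt_le _ _ HK2)) as Htl.
  pose proof (Series_ge_term (term c r) K (fun n => Rlt_le _ _ (term_pos c r n hc)) Hex) as HSl.
  fold (S c r) in HSu, HSl.
  assert (HSpos : 0 < S c r) by (pose proof (term_pos c r K hc); lra).
  assert (Hlow : - L - c - C * (L/t) <= ln (S c r)).
  { rewrite <- (ln_exp (- L - c - C * (L/t))). apply ln_le. apply exp_pos. fold C in Htl. lra. }
  assert (Hup : ln (S c r) <= ln 2 + - c + - L * (1 - rho)).
  { assert (0 < 2 * exp (-c)) by (pose proof (exp_pos (-c)); lra).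
    replace (ln 2 + - c + - L * (1 - rho)) with (ln (2 * exp (-c) * exp (- L * (1 - rho)))).
    2: { rewrite ln_mult, ln_mult, !ln_exp; try lra; apply exp_pos. }
    apply ln_le; auto. }
  assert (Hln2 : ln 2 <= 1) by (pose proof (ln_le_sub1 2); lra).
  assert (HcL : c <= e * L).
  { assert (c/e * e = c) by (field; lra). nra. }
  assert (H1L : 1 <= e * L).
  { assert (1/e * e = 1) by (field; lra). nra. }
  assert (HCx : C * (L/t) <= e * L).
  { replace (C * (L/t)) with ((C/t) * L) by (field; lra). apply Rmult_le_compat_r; [lra|].
    apply (Rmult_le_reg_r t); [lra|]. replace (C/t*t) with C by (field; lra). lra. }
  assert (Hw : Rabs (ln (S c r) + L) < eps * L).
  { apply Rabs_def1; nra. }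
  fold L.
  replace (ln (S c r) / - L - 1) with (- ((ln (S c r) + L) / L)) by (field; lra).
  rewrite Rabs_Ropp. unfold Rdiv. rewrite Rabs_mult, (Rabs_pos_eq (/ L)) by (left; apply Rinv_0_lt_compat; lra).
  apply (Rmult_lt_reg_r L); [lra|]. rewrite Rmult_assoc, Rinv_l by lra. lra.
Qed.
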